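(* For every $\tau\in\mathbb{H}^2$, $$\theta[\tfrac15;\tfrac15]^5-\theta[\tfrac15;\tfrac35]^5+\theta[\tfrac15;1]^5-\theta[\tfrac15;\tfrac75]^5+\theta[\tfrac15;\tfrac95]^5=0,$$ and $$\theta[\tfrac35;\tfrac15]^5-\theta[\tfrac35;\tfrac35]^5+\theta[\tfrac35;1]^5-\theta[\tfrac35;\tfrac75]^5+\theta[\tfrac35;\tfrac95]^5=0.$$
   Context: Let $\mathbb{H}^2=\{\tau\in\mathbb{C}:\Im\tau>0\}$. For a characteristic $(\epsilon,\epsilon')\in\mathbb{R}^2$, the theta function with characteristic is $$\theta[\epsilon;\epsilon'](\zeta,\tau)=\sum_{n\in\mathbb{Z}}\exp\Big(2\pi i\Big[\tfrac12\big(n+\tfrac{\epsilon}{2}\big)^2\tau+\big(n+\tfrac{\epsilon}{2}\big)\big(\zeta+\tfrac{\epsilon'}{2}\big)\Big]\Big),\quad (\zeta,\tau)\in\mathbb{C}\times\mathbb{H}^2,$$ (usually written with the column $\left[\begin{smallmatrix}\epsilon\\ \epsilon'\end{smallmatrix}\right]$), and the theta constant is $\theta[\epsilon;\epsilon']=\theta[\epsilon;\epsilon'](0,\tau)$, regarded as a function of $\tau$. Here $\theta[\epsilon;\epsilon']^5$ denotes the fifth power of the theta constant. *)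

(* Defs.v *)
From Stdlib Require Import Reals ZArith.
From Coquelicot Require Import Coquelicot.
Open Scope R_scope.

Definition Cexp (z : C) : C :=
  (exp (Re z) * cos (Im z), exp (Re z) * sin (Im z)).

Definition theta_term (e e' : R) (zeta tau : C) (n : Z) : C :=
  let a : C := RtoC (IZR n + e / 2) in
  Cexp (2 * PI * Ci * (/2 * (a * a) * tau + a * (zeta + RtoC (e' / 2))))%C.

Fixpoint Csum (f : nat -> C) (k : nat) : C :=
  match k with
  | O => RtoC 0
  | S k' => (Csum f k' + f k')%C
  end.

(* Symmetric partial sums over n = -N .. N. *)
Definition theta_partial (e e' : R) (zeta tau : C) (N : nat) : C :=
  Csum (fun k => theta_term e e' zeta tau (Z.of_nat k - Z.of_nat N)%Z) (2 * N + 1).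

(* theta[e;e'](zeta,tau) = sum_{n in Z} ..., the limit of the (absolutely
   convergent for Im tau > 0) series, taken componentwise. *)
Definition theta (e e' : R) (zeta tau : C) : C :=
  (real (Lim_seq (fun N => Re (theta_partial e e' zeta tau N))),
   real (Lim_seq (fun N => Im (theta_partial e e' zeta tau N)))).

Definition theta_const (e e' : R) (tau : C) : C := theta e e' (RtoC 0) tau.

Definition Cpow5 (z : C) : C := (z * z * z * z * z)%C.

(* Main.v *)
Require Import Defs.
From Stdlib Require Import Reals ZArith List Lia Lra Permutation.
From Coquelicot Require Import Coquelicot.
Open Scope R_scope.

Definition sumL {A} (f : A -> C) (l : list A) : C :=
  fold_right (fun x acc => (f x + acc)%C) (RtoC 0) l.

Lemma sumL_app {A} (f : A -> C) l1 l2 : sumL f (l1 ++ l2) = (sumL f l1 + sumL f l2)%C.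
Proof. induction l1; simpl. ring. rewrite IHl1. ring. Qed.

Lemma sumL_map {A B} (f : B -> C) (g : A -> B) l : sumL f (map g l) = sumL (fun x => f (g x)) l.
Proof. induction l; simpl; auto. rewrite IHl; auto. Qed.

Lemma sumL_ext {A} (f g : A -> C) l : (forall x, In x l -> f x = g x) -> sumL f l = sumL g l.
Proof. induction l; simpl; intros; auto. rewrite H, IHl; auto. Qed.

Lemma sumL_scal {A} (f : A -> C) l a : (a * sumL f l)%C = sumL (fun x => a * f x)%C l.
Proof. induction l; simpl. ring. rewrite <- IHl. ring. Qed.

Lemma sumL_plus {A} (f g : A -> C) l : (sumL f l + sumL g l)%C = sumL (fun x => f x + g x)%C l.
Proof. induction l; simpl. ring. rewrite <- IHl. ring. Qed.

Lemma sumL_minus {A} (f g : A -> C) l : (sumL f l - sumL g l)%C = sumL (fun x => f x - g x)%C l.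
Proof. induction l; simpl. ring. rewrite <- IHl. ring. Qed.

Lemma sumL_perm {A} (f : A -> C) l l' : Permutation l l' -> sumL f l = sumL f l'.
Proof. induction 1; simpl. reflexivity. rewrite IHPermutation; reflexivity. ring. rewrite IHPermutation1; auto. Qed.

Lemma sumL_prod {A B} (f : A -> C) (g : B -> C) l l' :
  (sumL f l * sumL g l')%C = sumL (fun p => f (fst p) * g (snd p))%C (list_prod l l').
Proof.
  induction l; simpl. ring.
  rewrite sumL_app, sumL_map, <- IHl. simpl. rewrite <- (sumL_scal g). ring.
Qed.

Lemma Re_sumL {A} (f : A -> C) l : Re (sumL f l) = fold_right (fun x acc => Re (f x) + acc) 0 l.
Proof. induction l; simpl; auto. rewrite <- IHl. reflexivity. Qed.
Lemma Im_sumL {A} (f : A -> C) l : Im (sumL f l) = fold_right (fun x acc => Im (f x) + acc) 0 l.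
Proof. induction l; simpl; auto. rewrite <- IHl. reflexivity. Qed.

Lemma sumL_bound {A} (f : A -> C) l B :
  (forall x, In x l -> Rabs (Re (f x)) <= B /\ Rabs (Im (f x)) <= B) ->
  Rabs (Re (sumL f l)) <= INR (length l) * B /\ Rabs (Im (sumL f l)) <= INR (length l) * B.
Proof.
  induction l; intros H.
  - simpl. rewrite Rabs_R0. lra.
  - replace (INR (length (a :: l))) with (INR (length l) + 1) by (simpl length; rewrite S_INR; auto).
    simpl. destruct (H a (or_introl eq_refl)) as [H1 H2].
    destruct (IHl (fun x Hx => H x (or_intror Hx))) as [H3 H4].
    unfold Re, Im in *.
    split.
    + eapply Rle_trans. apply Rabs_triang. lra.
    + eapply Rle_trans. apply Rabs_triang. lra.
Qed.

Lemma sumL_zero_sym {A} (f : A -> C) l : sumL f l = (- sumL f l)%C -> sumL f l = RtoC 0.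
Proof.
  destruct (sumL f l) as [x y]. intros H. injection H. intros. unfold RtoC. f_equal; lra.
Qed.

Lemma Cexp_add a b : Cexp (a + b)%C = (Cexp a * Cexp b)%C.
Proof.
  destruct a as [a1 a2], b as [b1 b2]. unfold Cexp, Cmult, Cplus; simpl.
  rewrite exp_plus, cos_plus, sin_plus. f_equal; ring.
Qed.

Lemma Cexp_ext a b : Re a = Re b -> Im a = Im b -> Cexp a = Cexp b.
Proof. unfold Cexp. intros -> ->. reflexivity. Qed.

Definition iR (x : R) : C := (0, x).

Lemma Cexp_shift_nat u (m : nat) :
  Cexp (u + iR (INR m * PI))%C = ((-1)^m * Cexp u)%C.
Proof.
  induction m.
  - simpl. unfold iR, Cexp; destruct u; simpl. 
    replace (r0 + 0*PI) with r0 by ring. replace (r+0) with r by ring.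
    unfold Cmult; simpl. f_equal; ring.
  - rewrite S_INR. replace ((-1)^(S m))%C with (-(-1)^m)%C by (simpl; ring).
    transitivity (Cexp ((u + iR (INR m * PI)) + iR PI)%C).
    { apply Cexp_ext; destruct u; simpl; ring. }
    replace ((-(-1)^m) * Cexp u)%C with (- ((-1)^m * Cexp u))%C by ring.
    rewrite <- IHm. destruct (u + iR (INR m * PI))%C as [x y]. unfold Cexp, iR; simpl.
    rewrite Rplus_0_r, neg_cos, neg_sin. unfold Copp, Cmult; simpl. f_equal; ring.
Qed.

Lemma pow_m1_even p : ((-1)^(2*p))%C = RtoC 1.
Proof.
  induction p. reflexivity.
  replace (2 * S p)%nat with (S (S (2*p))) by lia. simpl. simpl in IHp. rewrite IHp. 
  unfold RtoC, Cmult, Copp; simpl. f_equal; ring.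
Qed.

Lemma Cexp_even_nat u p : Cexp (u + iR (2 * INR p * PI))%C = Cexp u.
Proof.
  replace (2 * INR p * PI) with (INR (2*p) * PI) by (rewrite mult_INR; simpl; ring).
  rewrite Cexp_shift_nat, pow_m1_even. ring.
Qed.

Lemma Cexp_even u j : Cexp (u + iR (IZR (2*j) * PI))%C = Cexp u.
Proof.
  destruct (Z_le_gt_dec 0 j).
  - replace (IZR (2*j)) with (2 * INR (Z.to_nat j)).
    + apply Cexp_even_nat.
    + rewrite INR_IZR_INZ, Z2Nat.id by lia. rewrite mult_IZR. reflexivity.
  - set (p := Z.to_nat (-j)).
    transitivity (Cexp ((u + iR (IZR (2*j) * PI)) + iR (2 * INR p * PI))%C).
    + symmetry. apply Cexp_even_nat.
    + apply Cexp_ext; destruct u; unfold Re, Im, iR, Cplus; cbn [fst snd]; [ring|].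
      unfold p. rewrite INR_IZR_INZ, Z2Nat.id by lia. rewrite mult_IZR, opp_IZR. ring.
Qed.

Lemma Cexp_odd u j : Cexp (u + iR (IZR (2*j+1) * PI))%C = (- Cexp u)%C.
Proof.
  transitivity (Cexp ((u + iR (IZR (2*j) * PI)) + iR (INR 1 * PI))%C).
  - apply Cexp_ext; destruct u; unfold Re, Im, iR, Cplus; cbn [fst snd]; [ring|].
    rewrite plus_IZR. simpl. ring.
  - rewrite Cexp_shift_nat, Cexp_even. simpl. ring.
Qed.

Definition Clim (u : nat -> C) (l : C) :=
  is_lim_seq (fun n => Re (u n)) (Re l) /\ is_lim_seq (fun n => Im (u n)) (Im l).

Lemma Clim_plus u v a b : Clim u a -> Clim v b -> Clim (fun n => u n + v n)%C (a + b)%C.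
Proof.
  intros [H1 H2] [H3 H4]; split; unfold Re, Im, Cplus in *; simpl;
  apply is_lim_seq_plus'; auto.
Qed.
Lemma Clim_minus u v a b : Clim u a -> Clim v b -> Clim (fun n => u n - v n)%C (a - b)%C.
Proof.
  intros [H1 H2] [H3 H4]; split; unfold Re, Im, Cminus, Cplus, Copp in *; simpl;
  apply is_lim_seq_minus'; auto.
Qed.
Lemma Clim_mult u v a b : Clim u a -> Clim v b -> Clim (fun n => u n * v n)%C (a * b)%C.
Proof.
  intros [H1 H2] [H3 H4]; split; unfold Re, Im, Cmult in *; simpl.
  - apply is_lim_seq_minus'; apply is_lim_seq_mult'; auto.
  - apply is_lim_seq_plus'; apply is_lim_seq_mult'; auto.
Qed.
Lemma Clim_pow5 u a : Clim u a -> Clim (fun n => Cpow5 (u n)) (Cpow5 a).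
Proof. intros H. unfold Cpow5. repeat apply Clim_mult; auto. Qed.
Lemma Clim_unique u a b : Clim u a -> Clim u b -> a = b.
Proof.
  intros [H1 H2] [H3 H4].
  apply is_lim_seq_unique in H1, H2, H3, H4.
  rewrite H1 in H3. rewrite H2 in H4. injection H3; injection H4; intros.
  destruct a, b; unfold Re, Im in *; simpl in *; subst; auto.
Qed.
Lemma Clim_ext u v a : (forall n, u n = v n) -> Clim u a -> Clim v a.
Proof.
  intros E [H1 H2]; split; eapply is_lim_seq_ext; try eassumption; intros; simpl; rewrite E; auto.
Qed.


Lemma theta_term_eq e e' tau n :
  theta_term e e' (RtoC 0) tau n =
  Cexp (- (PI * (IZR n + e/2)^2 * Im tau), PI * (IZR n + e/2)^2 * Re tau + PI * (IZR n + e/2) * e').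
Proof.
  unfold theta_term. apply Cexp_ext; destruct tau as [x y]; unfold Re, Im, Cmult, Cplus, Ci, RtoC, Cinv; simpl; field.
Qed.

Lemma Cexp_pair_mult a b c d : (Cexp (a, b) * Cexp (c, d))%C = Cexp (a + c, b + d).
Proof. rewrite <- Cexp_add. reflexivity. Qed.


Definition T5 := (Z*Z*Z*Z*Z)%type.
Definition aa (c n : Z) : R := IZR n + IZR c / 5 / 2.
Definition Qf c (x : T5) : R :=
  let '((((n1,n2),n3),n4),n5) := x in aa c n1 ^2 + aa c n2 ^2 + aa c n3 ^2 + aa c n4 ^2 + aa c n5 ^2.
Definition Af c (x : T5) : R :=
  let '((((n1,n2),n3),n4),n5) := x in aa c n1 + aa c n2 + aa c n3 + aa c n4 + aa c n5.
Definition Ns (x : T5) : Z :=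
  let '((((n1,n2),n3),n4),n5) := x in (n1 + n2 + n3 + n4 + n5)%Z.
Definition shift (x : T5) (d : Z) : T5 :=
  let '((((n1,n2),n3),n4),n5) := x in ((((n1-d,n2-d),n3-d),n4-d),n5-d)%Z.
Definition ek (k : Z) : R := IZR (2*k+1) / 5.
Definition tk c tau k n := theta_term (IZR c / 5) (ek k) (RtoC 0) tau n.
Definition prod5 (f : Z -> C) (x : T5) : C :=
  let '((((n1,n2),n3),n4),n5) := x in (f n1 * f n2 * f n3 * f n4 * f n5)%C.
Definition EE (tau : C) (e' Q A : R) : C := Cexp (-(PI * Q * Im tau), PI * Q * Re tau + PI * e' * A).

Lemma prod5_tk c tau k x : prod5 (tk c tau k) x = EE tau (ek k) (Qf c x) (Af c x).
Proof.
  destruct x as [[[[n1 n2] n3] n4] n5]. unfold prod5, tk, EE, Qf, Af.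
  rewrite !theta_term_eq, !Cexp_pair_mult. apply Cexp_ext; unfold Re, Im, aa; simpl; ring.
Qed.

Definition Fq tau Q A : C :=
  (EE tau (ek 0) Q A - EE tau (ek 1) Q A + EE tau (ek 2) Q A - EE tau (ek 3) Q A + EE tau (ek 4) Q A)%C.

Definition FF c tau x : C :=
  (prod5 (tk c tau 0) x - prod5 (tk c tau 1) x + prod5 (tk c tau 2) x - prod5 (tk c tau 3) x
   + prod5 (tk c tau 4) x)%C.

Lemma FF_Fq c tau x : FF c tau x = Fq tau (Qf c x) (Af c x).
Proof. unfold FF, Fq. rewrite !prod5_tk. reflexivity. Qed.

Lemma Af_eq c x : Af c x = IZR (2 * Ns x + c) / 2.
Proof.
  destruct x as [[[[n1 n2] n3] n4] n5]. unfold Af, Ns, aa.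
  rewrite plus_IZR, mult_IZR, !plus_IZR. field.
Qed.

Lemma Qf_shift c x d : Qf c (shift x d) = Qf c x - 2 * IZR d * Af c x + 5 * IZR d ^ 2.
Proof.
  destruct x as [[[[n1 n2] n3] n4] n5]. unfold Qf, Af, shift, aa. rewrite !minus_IZR. ring.
Qed.
Lemma Af_shift c x d : Af c (shift x d) = Af c x - 5 * IZR d.
Proof.
  destruct x as [[[[n1 n2] n3] n4] n5]. unfold Af, shift, aa. rewrite !minus_IZR. ring.
Qed.
Lemma Ns_shift x d : Ns (shift x d) = (Ns x - 5 * d)%Z.
Proof. destruct x as [[[[n1 n2] n3] n4] n5]. unfold Ns, shift. ring. Qed.
Lemma shift_shift x d d' : shift (shift x d) d' = shift x (d + d').
Proof. destruct x as [[[[n1 n2] n3] n4] n5]. unfold shift. rewrite ?Z.sub_add_distr, ?Z.sub_0_r. reflexivity. Qed.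
Lemma shift_0 x : shift x 0 = x.
Proof. destruct x as [[[[n1 n2] n3] n4] n5]. unfold shift. rewrite ?Z.sub_add_distr, ?Z.sub_0_r. reflexivity. Qed.

Lemma EE_shift tau k Q A m :
  EE tau (ek k) Q (A - 5 * IZR (2*m+1)) = (- EE tau (ek k) Q A)%C.
Proof.
  unfold EE. rewrite <- (Cexp_odd _ (- 2*k*m - k - m - 1)).
  apply Cexp_ext; unfold Re, Im, iR, Cplus; cbn [fst snd]; [ring|].
  unfold ek. rewrite ?plus_IZR, ?mult_IZR, ?minus_IZR, ?mult_IZR, ?opp_IZR, ?mult_IZR, ?opp_IZR. field.
Qed.

Lemma Fq_shift tau Q A m : Fq tau Q (A - 5 * IZR (2*m+1)) = (- Fq tau Q A)%C.
Proof. unfold Fq. rewrite !EE_shift. ring. Qed.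

Lemma Cexp_0 : Cexp (RtoC 0) = RtoC 1.
Proof. unfold Cexp, RtoC; simpl. rewrite exp_0, cos_0, sin_0. f_equal; ring. Qed.

Lemma Cexp_iter b th k : Cexp (b + iR (INR k * th))%C = (Cexp b * (Cexp (iR th))^k)%C.
Proof.
  induction k.
  - simpl. rewrite Rmult_0_l. replace (b + iR 0)%C with b. ring.
    destruct b; unfold iR, Cplus; simpl; f_equal; ring.
  - rewrite S_INR. replace (b + iR ((INR k + 1) * th))%C with ((b + iR (INR k * th)) + iR th)%C.
    + rewrite Cexp_add, IHk. simpl. ring.
    + destruct b; unfold iR, Cplus; simpl; f_equal; ring.
Qed.

Lemma Fq_zero tau Q h j : (h mod 5 <> 0)%Z -> (5 + h = 2 * j)%Z -> Fq tau Q (IZR h / 2) = RtoC 0.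
Proof.
  intros Hm Hj.
  set (A := IZR h / 2).
  set (b := (-(PI * Q * Im tau), PI * Q * Re tau + PI * A / 5) : C).
  set (th := PI + 2 * PI * A / 5).
  set (z := Cexp (iR th)).
  assert (Hk : forall k : nat, EE tau (ek (Z.of_nat k)) Q A = ((-1)^k * (Cexp b * z^k))%C).
  { intros k. unfold z. rewrite <- Cexp_iter.
    replace (b + iR (INR k * th))%C with ((b + iR (2 * INR k * PI * A / 5)) + iR (INR k * PI))%C.
    - rewrite Cexp_shift_nat. rewrite Cmult_assoc.
      replace ((-1)^k * (-1)^k)%C with (RtoC 1).
      + rewrite Cmult_1_l. unfold EE. apply Cexp_ext; unfold b, Re, Im, iR, Cplus; cbn [fst snd]; [ring|].
        unfold ek. rewrite plus_IZR, mult_IZR, <- INR_IZR_INZ. field.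
      + rewrite <- Cpow_mult_l. replace (-1 * -1)%C with (RtoC 1) by ring. rewrite Cpow_1_l. reflexivity.
    - unfold b, th, iR, Cplus; cbn [fst snd]. f_equal; field. }
  assert (Hz5 : (z^5)%C = RtoC 1).
  { transitivity (Cexp (RtoC 0) * z^5)%C. { rewrite Cexp_0; ring. }
    unfold z. rewrite <- Cexp_iter.
    replace (INR 5 * th) with (IZR (2 * j) * PI).
    - rewrite Cexp_even. apply Cexp_0.
    - unfold th, A. rewrite <- Hj, plus_IZR. simpl. field. }
  assert (Hz1 : (z - 1)%C <> RtoC 0).
  { intros E. assert (Hs : sin th = 0).
    { unfold z, Cexp, iR in E. simpl in E. injection E. intros E2 _.
      rewrite exp_0 in E2. lra. }
    apply sin_eq_0_0 in Hs. destruct Hs as [k Hk0].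
    assert (Hk' : IZR (5 + h) = IZR (5 * k)).
    { rewrite plus_IZR, mult_IZR. unfold th, A in Hk0.
      apply (Rmult_eq_reg_r (PI / 5)). 2: { generalize PI_RGT_0; intros; apply Rgt_not_eq; unfold Rdiv; apply Rmult_gt_0_compat; lra. }
      field_simplify. field_simplify in Hk0. lra. }
    apply eq_IZR in Hk'. apply Hm. replace h with ((k-1)*5)%Z by lia. apply Z.mod_mul. lia. }
  assert (HS : (1 + z + z^2 + z^3 + z^4)%C = RtoC 0).
  { set (S := (1 + z + z^2 + z^3 + z^4)%C).
    assert (E : (S * (z - 1))%C = RtoC 0).
    { unfold S. transitivity (z^5 - 1)%C. ring. rewrite Hz5. ring. }
    transitivity (S * (z - 1) * / (z - 1))%C.
    - rewrite <- Cmult_assoc, Cinv_r by auto. ring.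
    - rewrite E. ring. }
  unfold Fq. 
  replace (EE tau (ek 0) Q A) with (EE tau (ek (Z.of_nat 0)) Q A) by reflexivity.
  replace (EE tau (ek 1) Q A) with (EE tau (ek (Z.of_nat 1)) Q A) by reflexivity.
  replace (EE tau (ek 2) Q A) with (EE tau (ek (Z.of_nat 2)) Q A) by reflexivity.
  replace (EE tau (ek 3) Q A) with (EE tau (ek (Z.of_nat 3)) Q A) by reflexivity.
  replace (EE tau (ek 4) Q A) with (EE tau (ek (Z.of_nat 4)) Q A) by reflexivity.
  rewrite !Hk. transitivity (Cexp b * (1 + z + z^2 + z^3 + z^4))%C.
  - simpl. ring.
  - rewrite HS. ring.
Qed.

Definition hh c x := (2 * Ns x + c)%Z.
Definition dd c x := (hh c x / 5)%Z.
Definition sig c x := shift x (dd c x).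

Lemma hh_shift c x d : hh c (shift x d) = (hh c x - 10 * d)%Z.
Proof. unfold hh. rewrite Ns_shift. ring. Qed.

Lemma sig_invol c x : sig c (sig c x) = x.
Proof.
  unfold sig at 1. unfold dd at 1. unfold sig. rewrite hh_shift.
  replace (hh c x - 10 * dd c x)%Z with (hh c x + (-2 * dd c x) * 5)%Z by ring.
  rewrite Z_div_plus_full by lia. rewrite shift_shift. fold (dd c x).
  replace (dd c x + (dd c x + -2 * dd c x))%Z with 0%Z by ring. apply shift_0.
Qed.

Lemma FF_sig c tau x : (c = 1 \/ c = 3)%Z -> FF c tau (sig c x) = (- FF c tau x)%C.
Proof.
  intros Hc. rewrite !FF_Fq. unfold sig.
  rewrite Qf_shift, Af_shift. rewrite Af_eq. fold (hh c x). fold (dd c x).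
  set (h := hh c x) in *. set (d := dd c x) in *.
  assert (Hh : h = (2 * Ns x + c)%Z) by reflexivity.
  assert (Hd : d = (h / 5)%Z) by reflexivity.
  clearbody h d.
  destruct (Z.eq_dec (h mod 5) 0) as [H0|H0].
  - assert (Hhd : h = (5 * d)%Z) by (Z.div_mod_to_equations; lia).
    assert (Hm : d = (2 * ((d - 1) / 2) + 1)%Z) by (Z.div_mod_to_equations; lia).
    replace (Qf c x - 2 * IZR d * (IZR h / 2) + 5 * IZR d ^ 2) with (Qf c x).
    + rewrite Hm. apply Fq_shift.
    + rewrite Hhd, mult_IZR. field.
  - assert (Hj : (5 + h = 2 * ((5 + h) / 2))%Z).
    { Z.div_mod_to_equations; lia. }
    rewrite (Fq_zero tau (Qf c x) h ((5 + h) / 2) H0 Hj).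
    replace (IZR h / 2 - 5 * IZR d) with (IZR (h - 10 * d) / 2)
      by (rewrite minus_IZR, mult_IZR; field).
    rewrite (Fq_zero tau _ (h - 10 * d) ((5 + h - 10 * d) / 2)).
    + unfold RtoC, Copp; simpl. f_equal; ring.
    + intros E. apply H0. replace h with (h - 10 * d + (2 * d) * 5)%Z by ring.
      rewrite Z_mod_plus_full. auto.
    + Z.div_mod_to_equations; lia.
Qed.


Lemma Csum_seq f k : Csum f k = sumL f (seq 0 k).
Proof.
  induction k. reflexivity.
  rewrite seq_S, sumL_app. simpl. rewrite IHk. ring.
Qed.

Definition RL (N : nat) : list Z := map (fun k => Z.of_nat k - Z.of_nat N)%Z (seq 0 (2*N+1)).

Lemma theta_partial_RL e e' z tau N :
  theta_partial e e' z tau N = sumL (fun n => theta_term e e' z tau n) (RL N).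
Proof. unfold theta_partial, RL. rewrite Csum_seq, sumL_map. reflexivity. Qed.

Lemma In_RL n N : In n (RL N) <-> (- Z.of_nat N <= n <= Z.of_nat N)%Z.
Proof.
  unfold RL. rewrite in_map_iff. split.
  - intros [k [Hk Hin]]. apply in_seq in Hin. lia.
  - intros H. exists (Z.to_nat (n + Z.of_nat N)). split.
    + rewrite Z2Nat.id by lia. ring.
    + apply in_seq. lia.
Qed.

Lemma NoDup_RL N : NoDup (RL N).
Proof.
  unfold RL. apply FinFun.Injective_map_NoDup. intros a b H. lia. apply seq_NoDup.
Qed.

Lemma NoDup_prod {A B} (l : list A) (l' : list B) : NoDup l -> NoDup l' -> NoDup (list_prod l l').
Proof.
  induction 1; intros H'; simpl. constructor.
  apply NoDup_app.
  - apply FinFun.Injective_map_NoDup; auto. intros a b E; injection E; auto.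
  - auto.
  - intros [u v] Hin Hin2. apply in_map_iff in Hin. destruct Hin as [y [E _]]. injection E; intros; subst.
    apply in_prod_iff in Hin2. tauto.
Qed.

Definition LL N : list T5 := list_prod (list_prod (list_prod (list_prod (RL N) (RL N)) (RL N)) (RL N)) (RL N).

Lemma NoDup_LL N : NoDup (LL N).
Proof. unfold LL. repeat apply NoDup_prod; apply NoDup_RL. Qed.

Definition inb N n := ((- Z.of_nat N <=? n)%Z && (n <=? Z.of_nat N)%Z)%bool.
Definition inbox N (x : T5) : bool :=
  let '((((n1,n2),n3),n4),n5) := x in (inb N n1 && inb N n2 && inb N n3 && inb N n4 && inb N n5)%bool.

Lemma inb_spec N n : inb N n = true <-> In n (RL N).
Proof. rewrite In_RL. unfold inb. rewrite Bool.andb_true_iff, !Z.leb_le. tauto. Qed.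

Lemma In_LL N x : In x (LL N) <-> inbox N x = true.
Proof.
  destruct x as [[[[n1 n2] n3] n4] n5]. unfold LL, inbox, T5 in *.
  rewrite !in_prod_iff, !Bool.andb_true_iff, !inb_spec. tauto.
Qed.

Lemma length_LL N : length (LL N) = ((2*N+1)^5)%nat.
Proof. unfold LL, T5. rewrite !length_prod. unfold RL. rewrite length_map, length_seq. simpl. ring. Qed.

Lemma Cpow5_sumL f l :
  Cpow5 (sumL f l) = sumL (prod5 f) (list_prod (list_prod (list_prod (list_prod l l) l) l) l).
Proof.
  unfold Cpow5. rewrite !sumL_prod. apply sumL_ext. intros [[[[n1 n2] n3] n4] n5] _. reflexivity.
Qed.

Definition Ab N c x := (inbox N x && inbox N (sig c x))%bool.
Definition sigt N c x := if Ab N c x then sig c x else x.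
Definition GG N c tau x := if Ab N c x then FF c tau x else RtoC 0.

Lemma Ab_sig N c x : Ab N c x = true -> Ab N c (sig c x) = true.
Proof. unfold Ab. rewrite sig_invol, Bool.andb_comm. auto. Qed.

Lemma sigt_invol N c x : sigt N c (sigt N c x) = x.
Proof.
  unfold sigt. destruct (Ab N c x) eqn:E.
  - rewrite (Ab_sig _ _ _ E). apply sig_invol.
  - rewrite E. auto.
Qed.

Lemma GG_sigt N c tau x : (c = 1 \/ c = 3)%Z -> GG N c tau (sigt N c x) = (- GG N c tau x)%C.
Proof.
  intros Hc. unfold GG, sigt. destruct (Ab N c x) eqn:E.
  - rewrite (Ab_sig _ _ _ E). apply FF_sig; auto.
  - rewrite E. unfold RtoC, Copp; simpl. f_equal; ring.
Qed.

Lemma sumL_opp {A} (f : A -> C) l : sumL (fun x => - f x)%C l = (- sumL f l)%C.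
Proof. induction l; simpl. unfold RtoC, Copp; simpl; f_equal; ring. rewrite IHl. ring. Qed.

Lemma sumL_GG N c tau : (c = 1 \/ c = 3)%Z -> sumL (GG N c tau) (LL N) = RtoC 0.
Proof.
  intros Hc. apply sumL_zero_sym.
  assert (P : Permutation (map (sigt N c) (LL N)) (LL N)).
  { apply NoDup_Permutation.
    - apply FinFun.Injective_map_NoDup. intros a b E.
      rewrite <- (sigt_invol N c a), E. apply sigt_invol.
      apply NoDup_LL.
    - apply NoDup_LL.
    - intros x. rewrite in_map_iff. split.
      + intros [y [Ey Hy]]. subst x. apply In_LL. apply In_LL in Hy. unfold sigt.
        destruct (Ab N c y) eqn:E; auto. unfold Ab in E. apply Bool.andb_true_iff in E. tauto.
      + intros Hx. exists (sigt N c x). split. apply sigt_invol.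
        apply In_LL. apply In_LL in Hx. unfold sigt.
        destruct (Ab N c x) eqn:E; auto. unfold Ab in E. apply Bool.andb_true_iff in E. tauto. }
  transitivity (sumL (GG N c tau) (map (sigt N c) (LL N))).
  { symmetry. apply sumL_perm; auto. }
  rewrite sumL_map, <- sumL_opp.
  apply sumL_ext. intros x _. apply GG_sigt; auto.
Qed.

Lemma EE_bound tau e' Q A :
  Rabs (Re (EE tau e' Q A)) <= exp (-(PI * Q * Im tau)) /\
  Rabs (Im (EE tau e' Q A)) <= exp (-(PI * Q * Im tau)).
Proof.
  unfold EE, Cexp, Re, Im; simpl. rewrite !Rabs_mult, !(Rabs_right (exp _)) by (left; apply exp_pos).
  generalize (exp_pos (-(PI * Q * snd tau))) (COS_bound (PI * Q * fst tau + PI * e' * A))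
    (SIN_bound (PI * Q * fst tau + PI * e' * A)); intros.
  split; apply Rle_trans with (exp (- (PI * Q * snd tau)) * 1); try lra;
  apply Rmult_le_compat_l; try lra; apply Rabs_le; lra.
Qed.

Lemma abs5 a b c d e : Rabs (a + - b + c + - d + e) <= Rabs a + Rabs b + Rabs c + Rabs d + Rabs e.
Proof.
  assert (H1 := Rabs_triang (a + - b + c + - d) e).
  assert (H2 := Rabs_triang (a + - b + c) (- d)).
  assert (H3 := Rabs_triang (a + - b) c).
  assert (H4 := Rabs_triang a (- b)).
  rewrite Rabs_Ropp in *. lra.
Qed.

Lemma Fq_bound tau Q A :
  Rabs (Re (Fq tau Q A)) <= 5 * exp (-(PI * Q * Im tau)) /\
  Rabs (Im (Fq tau Q A)) <= 5 * exp (-(PI * Q * Im tau)).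
Proof.
  destruct (EE_bound tau (ek 0) Q A), (EE_bound tau (ek 1) Q A), (EE_bound tau (ek 2) Q A),
    (EE_bound tau (ek 3) Q A), (EE_bound tau (ek 4) Q A).
  split.
  - replace (Re (Fq tau Q A)) with (Re (EE tau (ek 0) Q A) + - Re (EE tau (ek 1) Q A) + Re (EE tau (ek 2) Q A)
      + - Re (EE tau (ek 3) Q A) + Re (EE tau (ek 4) Q A)) by (unfold Fq, Re, Cminus, Cplus, Copp; simpl; ring).
    eapply Rle_trans; [apply abs5|]. lra.
  - replace (Im (Fq tau Q A)) with (Im (EE tau (ek 0) Q A) + - Im (EE tau (ek 1) Q A) + Im (EE tau (ek 2) Q A)
      + - Im (EE tau (ek 3) Q A) + Im (EE tau (ek 4) Q A)) by (unfold Fq, Im, Cminus, Cplus, Copp; simpl; ring).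
    eapply Rle_trans; [apply abs5|]. lra.
Qed.

Lemma aa_big N c n : (c = 1 \/ c = 3)%Z -> inb N n = false -> INR N <= aa c n ^ 2.
Proof.
  intros Hc H. unfold inb in H. apply Bool.andb_false_iff in H.
  rewrite !Z.leb_gt in H. unfold aa.
  assert (Hn : (n <= - Z.of_nat N - 1 \/ Z.of_nat N + 1 <= n)%Z) by lia.
  assert (HN := pos_INR N).
  assert (Hc' : IZR c = 1 \/ IZR c = 3) by (destruct Hc; subst; auto).
  rewrite INR_IZR_INZ in *.
  destruct Hn as [Hn|Hn]; apply IZR_le in Hn; rewrite ?minus_IZR, ?opp_IZR, ?plus_IZR in Hn; destruct Hc' as [E|E]; rewrite E; nra.
Qed.

Lemma Qf_big N c y : (c = 1 \/ c = 3)%Z -> inbox N y = false -> INR N <= Qf c y.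
Proof.
  intros Hc H. destruct y as [[[[n1 n2] n3] n4] n5]. unfold inbox in H. unfold Qf.
  assert (H1 := pow2_ge_0 (aa c n1)). assert (H2 := pow2_ge_0 (aa c n2)).
  assert (H3 := pow2_ge_0 (aa c n3)). assert (H4 := pow2_ge_0 (aa c n4)).
  assert (H5 := pow2_ge_0 (aa c n5)).
  repeat rewrite Bool.andb_false_iff in H.
  repeat destruct H as [H|H]; apply (aa_big N c) in H; auto; lra.
Qed.

Lemma FG_bound N c tau x : 0 < Im tau -> (c = 1 \/ c = 3)%Z -> In x (LL N) ->
  Rabs (Re (FF c tau x - GG N c tau x)) <= 5 * exp (-(PI * INR N * Im tau)) /\
  Rabs (Im (FF c tau x - GG N c tau x)) <= 5 * exp (-(PI * INR N * Im tau)).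
Proof.
  intros Ht Hc Hx. apply In_LL in Hx.
  assert (He := exp_pos (-(PI * INR N * Im tau))).
  unfold GG. destruct (Ab N c x) eqn:EA.
  - replace (FF c tau x - FF c tau x)%C with (RtoC 0) by ring.
    change (Re (RtoC 0)) with 0; change (Im (RtoC 0)) with 0. rewrite Rabs_R0. split; lra.
  - replace (FF c tau x - RtoC 0)%C with (FF c tau x) by ring.
    assert (Hs : inbox N (sig c x) = false).
    { unfold Ab in EA. rewrite Hx in EA. exact EA. }
    rewrite FF_Fq. rewrite Af_eq. fold (hh c x).
    destruct (Z.eq_dec (hh c x mod 5) 0) as [H0|H0].
    + assert (HQ : Qf c x = Qf c (sig c x)).
      { unfold sig. rewrite Qf_shift, Af_eq. fold (hh c x).
        assert (Hhd : hh c x = (5 * dd c x)%Z) by (unfold dd; Z.div_mod_to_equations; lia).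
        rewrite Hhd, mult_IZR. field. }
      assert (HN : INR N <= Qf c x) by (rewrite HQ; apply Qf_big; auto).
      assert (Hle : exp (- (PI * Qf c x * Im tau)) <= exp (- (PI * INR N * Im tau))).
      { destruct (Rle_lt_or_eq_dec _ _ HN) as [Hl|Hl].
        - left. apply exp_increasing. assert (0 < PI * Im tau) by (apply Rmult_lt_0_compat; auto; apply PI_RGT_0). nra.
        - rewrite Hl. right. reflexivity. }
      destruct (Fq_bound tau (Qf c x) (IZR (hh c x) / 2)). split; lra.
    + rewrite (Fq_zero tau (Qf c x) (hh c x) ((5 + hh c x) / 2) H0).
      * change (Re (RtoC 0)) with 0; change (Im (RtoC 0)) with 0. rewrite Rabs_R0. split; lra.
      * unfold hh. clear - Hc. Z.div_mod_to_equations. lia.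
Qed.


Lemma sumL_cons {A} (f : A -> C) a l : sumL f (a :: l) = (f a + sumL f l)%C.
Proof. reflexivity. Qed.
Lemma sumL_nil {A} (f : A -> C) : sumL f nil = RtoC 0.
Proof. reflexivity. Qed.

Lemma sumL_RL_S f N :
  sumL f (RL (S N)) = (sumL f (RL N) + (f (Z.of_nat (S N)) + f (- Z.of_nat (S N))%Z))%C.
Proof.
  unfold RL. replace (2 * S N + 1)%nat with (S (S (2 * N + 1))) by lia.
  rewrite seq_S. change (seq 0 (S (2 * N + 1))) with (0%nat :: seq 1 (2 * N + 1)).
  rewrite <- seq_shift, map_app. cbn [map]. rewrite map_map.
  rewrite sumL_app, !sumL_cons, sumL_nil.
  replace (map (fun x => (Z.of_nat (S x) - Z.of_nat (S N))%Z) (seq 0 (2 * N + 1)))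
    with (map (fun k => (Z.of_nat k - Z.of_nat N)%Z) (seq 0 (2 * N + 1))).
  2: { apply map_ext. intros. lia. }
  replace (Z.of_nat (0 + S (2 * N + 1)) - Z.of_nat (S N))%Z with (Z.of_nat (S N)) by lia.
  replace (Z.of_nat 0 - Z.of_nat (S N))%Z with (- Z.of_nat (S N))%Z by lia.
  ring.
Qed.

Lemma exp_INR_mult j x : exp (INR j * x) = exp x ^ j.
Proof.
  induction j. simpl. rewrite Rmult_0_l, exp_0. auto.
  rewrite S_INR, Rmult_plus_distr_r, Rmult_1_l, exp_plus, IHj. change (exp x ^ S j) with (exp x * exp x ^ j). ring.
Qed.

Lemma theta_term_bound e e' tau n :
  Rabs (Re (theta_term e e' (RtoC 0) tau n)) <= exp (- (PI * (IZR n + e/2)^2 * Im tau)) /\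
  Rabs (Im (theta_term e e' (RtoC 0) tau n)) <= exp (- (PI * (IZR n + e/2)^2 * Im tau)).
Proof.
  rewrite theta_term_eq. unfold Cexp, Re, Im; simpl.
  rewrite !Rabs_mult, !(Rabs_right (exp _)) by (left; apply exp_pos).
  set (E := exp _). set (y := _ + _).
  assert (0 < E) by apply exp_pos.
  generalize (COS_bound y) (SIN_bound y); intros.
  split; apply Rle_trans with (E * 1); try lra; apply Rmult_le_compat_l; try lra; apply Rabs_le; lra.
Qed.

Lemma exp_decay c tau n (j : nat) : 0 < Im tau -> (c = 1 \/ c = 3)%Z ->
  (n = Z.of_nat (S j) \/ n = - Z.of_nat (S j))%Z ->
  exp (- (PI * (IZR n + IZR c / 5 / 2)^2 * Im tau)) <= exp (- (PI * Im tau)) ^ j.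
Proof.
  intros Ht Hc Hn. rewrite <- exp_INR_mult.
  assert (Hp : 0 < PI * Im tau) by (apply Rmult_lt_0_compat; auto; apply PI_RGT_0).
  assert (Ha : INR j <= (IZR n + IZR c / 5 / 2)^2).
  { assert (Hc' : IZR c = 1 \/ IZR c = 3) by (destruct Hc; subst; auto).
    assert (HN := pos_INR j). rewrite INR_IZR_INZ in *.
    destruct Hn as [Hn|Hn]; subst n; rewrite ?opp_IZR, <- ?INR_IZR_INZ, S_INR, ?INR_IZR_INZ;
    destruct Hc' as [E|E]; rewrite E; nra. }
  destruct (Rle_lt_or_eq_dec _ _ Ha) as [Hl|Hl].
  - left. apply exp_increasing. nra.
  - rewrite <- Hl. right. f_equal. ring.
Qed.

Lemma theta_conv c e' tau : 0 < Im tau -> (c = 1 \/ c = 3)%Z ->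
  exists l, Clim (fun N => sumL (fun n => theta_term (IZR c / 5) e' (RtoC 0) tau n) (RL N)) l.
Proof.
  intros Ht Hc.
  set (f := fun n => theta_term (IZR c / 5) e' (RtoC 0) tau n).
  set (D := fun j : nat => (f (Z.of_nat (S j)) + f (- Z.of_nat (S j))%Z)%C).
  set (r := exp (- (PI * Im tau))).
  assert (Hr : Rabs r < 1).
  { unfold r. rewrite Rabs_right by (left; apply exp_pos). rewrite <- exp_0. apply exp_increasing.
    assert (0 < PI * Im tau) by (apply Rmult_lt_0_compat; auto; apply PI_RGT_0). lra. }
  assert (HB : forall j, Rabs (Re (D j)) <= 2 * r ^ j /\ Rabs (Im (D j)) <= 2 * r ^ j).
  { intros j. unfold D, f.
    destruct (theta_term_bound (IZR c / 5) e' tau (Z.of_nat (S j))) as [A1 A2].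
    destruct (theta_term_bound (IZR c / 5) e' tau (- Z.of_nat (S j))) as [B1 B2].
    assert (E1 := exp_decay c tau (Z.of_nat (S j)) j Ht Hc (or_introl eq_refl)).
    assert (E2 := exp_decay c tau (- Z.of_nat (S j)) j Ht Hc (or_intror eq_refl)).
    fold r in E1, E2.
    assert (T1 := Rabs_triang (Re (f (Z.of_nat (S j)))) (Re (f (- Z.of_nat (S j))%Z))).
    assert (T2 := Rabs_triang (Im (f (Z.of_nat (S j)))) (Im (f (- Z.of_nat (S j))%Z))).
    unfold f in T1, T2. 
    change (Re (theta_term (IZR c / 5) e' 0 tau (Z.of_nat (S j)) + theta_term (IZR c / 5) e' 0 tau (- Z.of_nat (S j)))%C)
      with (Re (theta_term (IZR c / 5) e' 0 tau (Z.of_nat (S j))) + Re (theta_term (IZR c / 5) e' 0 tau (- Z.of_nat (S j)))).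
    change (Im (theta_term (IZR c / 5) e' 0 tau (Z.of_nat (S j)) + theta_term (IZR c / 5) e' 0 tau (- Z.of_nat (S j)))%C)
      with (Im (theta_term (IZR c / 5) e' 0 tau (Z.of_nat (S j))) + Im (theta_term (IZR c / 5) e' 0 tau (- Z.of_nat (S j)))).
    split; lra. }
  assert (Hser : forall g : nat -> R, (forall j, Rabs (g j) <= 2 * r ^ j) -> exists l : R, is_lim_seq (sum_n g) l).
  { intros g Hg. assert (ex_series g).
    { apply (ex_series_le g (fun j => 2 * r ^ j)).
      - intros j. apply Hg.
      - apply (ex_series_scal_l 2 (fun j => r ^ j)). apply ex_series_geom; auto. }
    destruct H as [l Hl]. exists l. exact Hl. }
  destruct (Hser (fun j => Re (D j))) as [lr Hlr]. { intros; apply HB. }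
  destruct (Hser (fun j => Im (D j))) as [li Hli]. { intros; apply HB. }
  assert (H0 : sumL f (RL 0) = f 0%Z).
  { change (RL 0) with (0%Z :: nil). rewrite sumL_cons, sumL_nil. ring. }
  assert (Hrec : forall N, sumL f (RL (S N)) = (f 0%Z + (sum_n (fun j => Re (D j)) N, sum_n (fun j => Im (D j)) N))%C).
  { induction N.
    - rewrite sumL_RL_S, H0, !sum_O. fold (D 0%nat). destruct (D 0%nat); reflexivity.
    - rewrite sumL_RL_S, IHN, !sum_Sn. fold (D (S N)). destruct (D (S N)).
      unfold plus; simpl. unfold Cplus; simpl. f_equal; ring. }
  exists (f 0%Z + (lr, li))%C. split.
  - apply is_lim_seq_incr_1.
    apply is_lim_seq_ext with (fun N => Re (f 0%Z) + sum_n (fun j => Re (D j)) N).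
    { intros N. rewrite Hrec. reflexivity. }
    apply is_lim_seq_plus'. apply is_lim_seq_const. auto.
  - apply is_lim_seq_incr_1.
    apply is_lim_seq_ext with (fun N => Im (f 0%Z) + sum_n (fun j => Im (D j)) N).
    { intros N. rewrite Hrec. reflexivity. }
    apply is_lim_seq_plus'. apply is_lim_seq_const. auto.
Qed.

Lemma exp_ge_pow6 z : 0 <= z -> (z / 6) ^ 6 <= exp z.
Proof.
  intros Hz. replace z with (INR 6 * (z / 6)) at 2 by (simpl; field).
  rewrite exp_INR_mult. apply pow_incr. split. lra.
  generalize (exp_ineq1_le (z / 6)). lra.
Qed.

Lemma inv_lim : is_lim_seq (fun N => / (INR N + 1)) 0.
Proof.
  assert (H : is_lim_seq (fun N => INR N + 1) p_infty).
  { apply is_lim_seq_ext with (fun N => INR (S N)). intros; apply S_INR.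
    apply (is_lim_seq_incr_1 INR). apply is_lim_seq_INR. }
  apply is_lim_seq_inv in H. simpl in H. exact H. discriminate.
Qed.

Lemma decay_lim t : 0 < t ->
  is_lim_seq (fun N => INR ((2*N+1)^5) * (5 * exp (-(PI * INR N * t)))) 0.
Proof.
  intros Ht. set (y := PI * t). assert (Hy : 0 < y) by (apply Rmult_lt_0_compat; auto; apply PI_RGT_0).
  set (K := 160 * exp y * 6^6 / y^6).
  apply is_lim_seq_le_le with (fun _ => 0) (fun N => K * / (INR N + 1)).
  - intros N. set (M := INR N + 1). assert (HM : 1 <= M) by (unfold M; generalize (pos_INR N); lra).
    replace (INR ((2*N+1)^5)) with ((2*M-1)^5) by (unfold M; rewrite pow_INR, plus_INR, mult_INR; simpl; ring).
    replace (-(PI * INR N * t)) with (y - y * M) by (unfold y, M; ring).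
    replace (exp (y - y * M)) with (exp y * / exp (y * M)) by (rewrite <- exp_Ropp, <- exp_plus; f_equal; ring).
    set (E := exp (y * M)).
    assert (HE : (y * M / 6)^6 <= E) by (apply exp_ge_pow6; nra).
    assert (HE0 : 0 < (y * M / 6)^6) by (apply pow_lt; nra).
    assert (Hey := exp_pos y).
    assert (H2M : 0 <= 2 * M - 1) by lra.
    assert (H2M5 : 0 <= (2*M-1)^5) by (apply pow_le; lra).
    split.
    + apply Rmult_le_pos; auto. apply Rmult_le_pos; try lra. apply Rmult_le_pos; try lra.
      left; apply Rinv_0_lt_compat; lra.
    + apply Rle_trans with ((2*M)^5 * (5 * (exp y * / ((y * M / 6)^6)))).
      * apply Rmult_le_compat; try lra.
        -- apply Rmult_le_pos; try lra. apply Rmult_le_pos; try lra. left; apply Rinv_0_lt_compat; lra.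
        -- apply pow_incr; lra.
        -- apply Rmult_le_compat_l; try lra. apply Rmult_le_compat_l; try lra.
           apply Rinv_le_contravar; lra.
      * right. unfold K. field. split; lra.
  - apply is_lim_seq_const.
  - replace (Finite 0) with (Rbar_mult K 0) by (simpl; f_equal; ring).
    apply is_lim_seq_scal_l. apply inv_lim.
Qed.


Lemma theta_const_lim c e' tau : 0 < Im tau -> (c = 1 \/ c = 3)%Z ->
  Clim (fun N => theta_partial (IZR c / 5) e' (RtoC 0) tau N) (theta_const (IZR c / 5) e' tau).
Proof.
  intros Ht Hc. destruct (theta_conv c e' tau Ht Hc) as [l Hl].
  assert (Hl' : Clim (fun N => theta_partial (IZR c / 5) e' (RtoC 0) tau N) l).
  { eapply Clim_ext; [|exact Hl]. intros N. rewrite theta_partial_RL. reflexivity. }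
  replace (theta_const (IZR c / 5) e' tau) with l; auto.
  unfold theta_const, theta. destruct Hl' as [H1 H2].
  rewrite (is_lim_seq_unique _ _ H1), (is_lim_seq_unique _ _ H2). simpl. destruct l; reflexivity.
Qed.

Definition Phi c tau N : C :=
  (Cpow5 (theta_partial (IZR c / 5) (ek 0) (RtoC 0) tau N)
   - Cpow5 (theta_partial (IZR c / 5) (ek 1) (RtoC 0) tau N)
   + Cpow5 (theta_partial (IZR c / 5) (ek 2) (RtoC 0) tau N)
   - Cpow5 (theta_partial (IZR c / 5) (ek 3) (RtoC 0) tau N)
   + Cpow5 (theta_partial (IZR c / 5) (ek 4) (RtoC 0) tau N))%C.

Lemma Phi_sum c tau N : Phi c tau N = sumL (FF c tau) (LL N).
Proof.
  unfold Phi. rewrite !theta_partial_RL, !Cpow5_sumL. fold (LL N).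
  repeat (rewrite sumL_minus || rewrite sumL_plus).
  apply sumL_ext. intros x _. unfold FF, tk. reflexivity.
Qed.

Lemma Phi_lim0 c tau : 0 < Im tau -> (c = 1 \/ c = 3)%Z -> Clim (Phi c tau) (RtoC 0).
Proof.
  intros Ht Hc.
  assert (E : forall N, Phi c tau N = sumL (fun x => FF c tau x - GG N c tau x)%C (LL N)).
  { intros N. rewrite Phi_sum, <- sumL_minus, sumL_GG by auto. ring. }
  assert (B : forall N, Rabs (Re (Phi c tau N)) <= INR ((2*N+1)^5) * (5 * exp (-(PI * INR N * Im tau)))
                     /\ Rabs (Im (Phi c tau N)) <= INR ((2*N+1)^5) * (5 * exp (-(PI * INR N * Im tau)))).
  { intros N. rewrite E, <- length_LL. apply sumL_bound. intros x Hx. apply FG_bound; auto. }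
  assert (L := decay_lim (Im tau) Ht).
  assert (L' := proj1 (is_lim_seq_opp _ _) L). replace (Rbar_opp 0) with (Finite 0) in L' by (simpl; f_equal; ring).
  split.
  - change (Re (RtoC 0)) with 0. apply is_lim_seq_le_le with (2 := L') (3 := L). intros N. destruct (B N) as [B1 _].
    apply Rabs_le_between in B1. lra.
  - change (Im (RtoC 0)) with 0. apply is_lim_seq_le_le with (2 := L') (3 := L). intros N. destruct (B N) as [_ B2].
    apply Rabs_le_between in B2. lra.
Qed.

Lemma main_c c tau : 0 < Im tau -> (c = 1 \/ c = 3)%Z ->
  (Cpow5 (theta_const (IZR c / 5) (ek 0) tau) - Cpow5 (theta_const (IZR c / 5) (ek 1) tau)
   + Cpow5 (theta_const (IZR c / 5) (ek 2) tau) - Cpow5 (theta_const (IZR c / 5) (ek 3) tau)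
   + Cpow5 (theta_const (IZR c / 5) (ek 4) tau))%C = RtoC 0.
Proof.
  intros Ht Hc. apply (Clim_unique (Phi c tau)); [|apply Phi_lim0; auto].
  unfold Phi.
  apply Clim_plus; [apply Clim_minus; [apply Clim_plus; [apply Clim_minus|]|]|];
  apply Clim_pow5; apply theta_const_lim; auto.
Qed.


Theorem theorem3p1 (tau : C) (Htau : 0 < Im tau) :
  (Cpow5 (theta_const (1/5) (1/5) tau) - Cpow5 (theta_const (1/5) (3/5) tau)
   + Cpow5 (theta_const (1/5) 1 tau) - Cpow5 (theta_const (1/5) (7/5) tau)
   + Cpow5 (theta_const (1/5) (9/5) tau))%C = RtoC 0
  /\
  (Cpow5 (theta_const (3/5) (1/5) tau) - Cpow5 (theta_const (3/5) (3/5) tau)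
   + Cpow5 (theta_const (3/5) 1 tau) - Cpow5 (theta_const (3/5) (7/5) tau)
   + Cpow5 (theta_const (3/5) (9/5) tau))%C = RtoC 0.
Proof.
  assert (E0 : ek 0 = 1/5) by (unfold ek; simpl; field).
  assert (E1 : ek 1 = 3/5) by (unfold ek; simpl; field).
  assert (E2 : ek 2 = 1) by (unfold ek; simpl; field).
  assert (E3 : ek 3 = 7/5) by (unfold ek; simpl; field).
  assert (E4 : ek 4 = 9/5) by (unfold ek; simpl; field).
  split.
  - assert (H := main_c 1 tau Htau (or_introl eq_refl)).
    rewrite E0, E1, E2, E3, E4 in H. exact H.
  - assert (H := main_c 3 tau Htau (or_intror eq_refl)).
    rewrite E0, E1, E2, E3, E4 in H. exact H.
Qed.
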